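(* Let $\mathbf{X}$ be a good sgrm and $\mathbf{W}$ an $N$-sgrm over $\mathbb{R}^d$ on $[0,T]$, and let $v=(v_1,\dots,v_d)$ with $v_i\in\mathcal{L}(\mathbb{R}^d)$. Then a path $Y:[0,T]\to\mathbb{R}^e$ solves $$dY=f(Y)\,d(T_v(\mathbf{X}))\qquad\text{resp.}\qquad dY=f(Y)\,d(\mathcal{T}_v[\mathbf{W}])$$ if and only if it solves $$dY=f^v(Y)\,d\mathbf{X}\qquad\text{resp.}\qquad dY=f^v(Y)\,d\mathbf{W}.$$
   Context: Fix $T>0$, $d,e\ge1$. $T((\mathbb{R}^d))$: formal tensor series over words in $\{1,\dots,d\}$ (incl. empty word, unit $\mathbf{1}$), concatenation $\otimes$, $\langle\mathbf{x},w\rangle$ coefficient of $w$; $T^N(\mathbb{R}^d)$: span of words of length $\le N$ with truncated product $\otimes_N$, projection $\mathrm{proj}_N$. Shuffle: bilinear, unit $\mathbf{1}$, $wi\sqcup\!\sqcup vj=(w\sqcup\!\sqcup vj)i+(wi\sqcup\!\sqcup v)j$. $\mathcal{L}(\mathbb{R}^d)$: Lie polynomials generated by the letters; $\mathcal{L}^N(\mathbb{R}^d)=\mathrm{proj}_N\mathcal{L}(\mathbb{R}^d)$. $N$-sgrm: non-zero $\mathbf{X}:[0,T]^2\to T^N(\mathbb{R}^d)$ with $\langle\mathbf{X}_{s,t},u\sqcup\!\sqcup w\rangle=\langle\mathbf{X}_{s,t},u\rangle\langle\mathbf{X}_{s,t},w\rangle$ ($|u|+|w|\le N$), $\mathbf{X}_{s,u}\otimes_N\mathbf{X}_{u,t}=\mathbf{X}_{s,t}$,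 smooth $t\mapsto\langle\mathbf{X}_{s,t},w\rangle$; sgrm: same in $T((\mathbb{R}^d))$ with $\otimes$ and all words. Diagonal derivative $\dot{\mathbf{X}}_{s,s}=\partial_t|_{t=s}\mathbf{X}_{s,t}$. $\mathrm{MinExt}(\mathbf{Y})$ of an $N$-sgrm $\mathbf{Y}$: the unique sgrm agreeing with $\mathbf{Y}$ on words of length $\le N$ with diagonal derivative in $\mathcal{L}^N(\mathbb{R}^d)$; good sgrm: $\mathrm{MinExt}(\mathbf{Y})$ for some $N$-sgrm $\mathbf{Y}$ (then its diagonal derivative lies in some $\mathcal{L}^K(\mathbb{R}^d)$ for all times). Translation: $T_v$ is the $\otimes$-algebra endomorphism of $T((\mathbb{R}^d))$ (continuous coordinatewise) with $e_i\mapsto e_i+v_i$; $T_v(\mathbf{X})_{s,t}:=T_v(\mathbf{X}_{s,t})$ (a good sgrm). With $N'$ the smallest integer such that $v_i\in\mathcal{L}^{N'}(\mathbb{R}^d)$ for all $i$ and $M=NN'$, $\mathcal{T}_v[\mathbf{W}]$ is the $M$-sgrm $\mathcal{T}_v[\mathbf{W}]_{s,t}:=\mathrm{proj}_MT_v(\mathrm{MinExt}(\mathbf{W})_{s,t})$. Vector fields: $f_1,\dots,f_d$ smooth on $\mathbb{R}^e$ with bounded derivatives; $g\vartriangleright h:=g^i(\partial_ih^j)\partial_j$; $f_{\mathbf{1}}=\mathrm{id}$, $f_{\ell_1\cdots\ell_n}:=f_{\ell_1}\vartriangleright(\cdots\vartriangleright(f_{\ell_{n-1}}\vartriangleright f_{\ell_n})\cdots)$,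 $f_{\mathbf{x}}:=\sum_w\langle\mathbf{x},w\rangle f_w$ for $\mathbf{x}\in T(\mathbb{R}^d)$. $f^v_i:=f_i+f_{v_i}$, and $f^v_w$ is built from $(f^v_1,\dots,f^v_d)$ by the same iterated $\vartriangleright$ formula. For $\mathbf{X}$ an $K$-sgrm or a good sgrm with $\dot{\mathbf{X}}_{s,s}\in\mathcal{L}^K(\mathbb{R}^d)$ for all $s$, and a family $g$ of this type, ''$Y$ solves $dY=g(Y)d\mathbf{X}$'' means $Y$ is smooth with $\dot Y_s=\sum_{|w|\le K}g_w(Y_s)\langle\dot{\mathbf{X}}_{s,s},w\rangle$ for all $s$. *)

(* Defs.v *)
From Stdlib Require Import Reals.
From Coquelicot Require Import Coquelicot.
From mathcomp Require Import all_boot.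

Set Implicit Arguments.
Unset Strict Implicit.
Unset Printing Implicit Defensive.

Local Open Scope R_scope.

Definition Rsum {A : Type} (s : seq A) (F : A -> R) : R :=
  foldr (fun a acc => F a + acc) 0 s.

(* A word over {1..d} is a seq 'I_d; an element of T((R^d)) is its
   coefficient function <x, w>. *)
Definition tensor (d : nat) := seq 'I_d -> R.

Fixpoint words_len (d n : nat) : seq (seq 'I_d) :=
  match n with
  | 0 => [:: [::]]
  | n'.+1 => [seq i :: w | i <- enum 'I_d, w <- words_len d n']
  end.

Definition words_upto (d n : nat) : seq (seq 'I_d) :=
  flatten [seq words_len d k | k <- iota 0%N n.+1].

Definition tone {d} : tensor d := fun w => if w is [::] then 1 else 0.
Definition letter {d} (i : 'I_d) : tensor d :=
  fun w => if w == [:: i] then 1 else 0.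
Definition tadd {d} (x y : tensor d) : tensor d := fun w => x w + y w.
Definition tscale {d} (c : R) (x : tensor d) : tensor d := fun w => c * x w.

Definition tmul {d} (x y : tensor d) : tensor d :=
  fun w => Rsum (iota 0%N (size w).+1) (fun k => x (take k w) * y (drop k w)).

Definition tbracket {d} (x y : tensor d) : tensor d :=
  fun w => tmul x y w - tmul y x w.

Definition tproj {d} (N : nat) (x : tensor d) : tensor d :=
  fun w => if (size w <= N)%N then x w else 0.

(* shuffle of reversed words with the left-recursion; after reversing back
   this is exactly the recursion wi sh vj = (w sh vj) i + (wi sh v) j,
   with unit the empty word.  The result is the multiset of words (as a list). *)
Fixpoint shl {I : Type} (u : seq I) : seq I -> seq (seq I) :=
  match u with
  | [::] => fun v => [:: v]
  | a :: u' =>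
      fix g (v : seq I) : seq (seq I) :=
        match v with
        | [::] => [:: a :: u']
        | b :: v' => map (cons a) (shl u' v) ++ map (cons b) (g v')
        end
  end.

Definition shuffle {I : Type} (u v : seq I) : seq (seq I) :=
  map rev (shl (rev u) (rev v)).

Definition tpair_shuffle {d} (x : tensor d) (u v : seq 'I_d) : R :=
  Rsum (shuffle u v) x.

Inductive is_lie {d} : tensor d -> Prop :=
  | lie_letter (i : 'I_d) : is_lie (letter i)
  | lie_add (p q : tensor d) : is_lie p -> is_lie q -> is_lie (tadd p q)
  | lie_scale (c : R) (p : tensor d) : is_lie p -> is_lie (tscale c p)
  | lie_bracket (p q : tensor d) : is_lie p -> is_lie q -> is_lie (tbracket p q)
  | lie_ext (p q : tensor d) : (forall w, p w = q w) -> is_lie p -> is_lie q.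

Definition in_LN {d} (N : nat) (x : tensor d) : Prop :=
  exists l, is_lie l /\ forall w, x w = tproj N l w.

Definition in0T (T t : R) : Prop := 0 <= t <= T.

Definition deriv_within (T : R) (g : R -> R) (s l : R) : Prop :=
  forall eps : R, 0 < eps -> exists delta : R, 0 < delta /\
    forall t, in0T T t -> t <> s -> Rabs (t - s) < delta ->
      Rabs ((g t - g s) / (t - s) - l) < eps.

Definition smooth_on (T : R) (g : R -> R) : Prop :=
  exists G : R -> R, (forall n x, ex_derive_n G n x) /\
    (forall t, in0T T t -> G t = g t).

Definition twopar (d : nat) := R -> R -> tensor d.

Definition is_Nsgrm {d} (T : R) (N : nat) (X : twopar d) : Prop :=
  (forall s t w, in0T T s -> in0T T t -> (N < size w)%N -> X s t w = 0) /\
  (exists s t w, in0T T s /\ in0T T t /\ X s t w <> 0) /\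
  (forall s t (u w : seq 'I_d), in0T T s -> in0T T t ->
      (size u + size w <= N)%N ->
      tpair_shuffle (X s t) u w = X s t u * X s t w) /\
  (forall s u t w, in0T T s -> in0T T u -> in0T T t -> (size w <= N)%N ->
      tmul (X s u) (X u t) w = X s t w) /\
  (forall s w, in0T T s -> smooth_on T (fun t => X s t w)).

Definition is_sgrm {d} (T : R) (X : twopar d) : Prop :=
  (exists s t w, in0T T s /\ in0T T t /\ X s t w <> 0) /\
  (forall s t (u w : seq 'I_d), in0T T s -> in0T T t ->
      tpair_shuffle (X s t) u w = X s t u * X s t w) /\
  (forall s u t w, in0T T s -> in0T T u -> in0T T t ->
      tmul (X s u) (X u t) w = X s t w) /\
  (forall s w, in0T T s -> smooth_on T (fun t => X s t w)).

Definition is_diag_deriv {d} (T : R) (X : twopar d) (s : R) (D : tensor d) : Prop :=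
  forall w, deriv_within T (fun t => X s t w) s (D w).

Definition is_MinExt {d} (T : R) (N : nat) (W X : twopar d) : Prop :=
  is_sgrm T X /\
  (forall s t w, in0T T s -> in0T T t -> (size w <= N)%N -> X s t w = W s t w) /\
  (forall s D, in0T T s -> is_diag_deriv T X s D -> in_LN N D).

Definition is_good_sgrm {d} (T : R) (X : twopar d) : Prop :=
  exists (N : nat) (W : twopar d), is_Nsgrm T N W /\ is_MinExt T N W X.

Definition tprod {d} (xs : seq (tensor d)) : tensor d := foldr tmul tone xs.

(* T_v(x): the (coordinatewise continuous) algebra endomorphism with
   e_i |-> e_i + v_i, i.e. sum_w <x,w> (e_{w1}+v_{w1}) (x) ... (x) (e_{wn}+v_{wn}).
   Since e_i + v_i has no constant term (v_i Lie), only words w with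
   |w| <= |u| contribute to the coefficient of u. *)
Definition translate_t {d} (v : 'I_d -> tensor d) (x : tensor d) : tensor d :=
  fun u => Rsum (words_upto d (size u))
             (fun w => x w * tprod [seq tadd (letter i) (v i) | i <- w] u).

Definition translate {d} (v : 'I_d -> tensor d) (X : twopar d) : twopar d :=
  fun s t => translate_t v (X s t).

(* \mathcal{T}_v[W]_{s,t} = proj_M T_v(MinExt(W)_{s,t}); here Xm = MinExt(W) *)
Definition calT {d} (v : 'I_d -> tensor d) (M : nat) (Xm : twopar d) : twopar d :=
  fun s t => tproj M (translate_t v (Xm s t)).

Definition point (e : nat) := 'I_e -> R.
Definition VF (e : nat) := point e -> point e.

Definition shift {e} (y : point e) (i : 'I_e) (t : R) : point e :=
  fun k => if k == i then y k + t else y k.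

Definition pd {e} (i : 'I_e) (h : point e -> R) : point e -> R :=
  fun y => Derive (fun t => h (shift y i t)) 0.

Definition iter_pd {e} (l : seq 'I_e) (h : point e -> R) : point e -> R :=
  foldr pd h l.

Definition continuous_Re {e} (F : point e -> R) : Prop :=
  forall y eps, 0 < eps -> exists delta, 0 < delta /\
    forall z, (forall k, Rabs (z k - y k) < delta) -> Rabs (F z - F y) < eps.

Definition smooth_bdd_field {e} (g : VF e) : Prop :=
  forall (l : seq 'I_e) (j : 'I_e),
    continuous_Re (iter_pd l (fun y => g y j)) /\
    (forall i y, ex_derive (fun t => iter_pd l (fun z => g z j) (shift y i t)) 0) /\
    (l <> [::] -> exists C, forall y, Rabs (iter_pd l (fun z => g z j) y) <= C).

Definition tri {e} (g h : VF e) : VF e :=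
  fun y j => Rsum (enum 'I_e) (fun i => g y i * pd i (fun z => h z j) y).

Fixpoint fw {d e} (g : 'I_d -> VF e) (w : seq 'I_d) : VF e :=
  match w with
  | [::] => fun y => y
  | l :: w' => match w' with
               | [::] => g l
               | _ => tri (g l) (fw g w')
               end
  end.

Definition fpoly {d e} (g : 'I_d -> VF e) (n : nat) (x : tensor d) : VF e :=
  fun y j => Rsum (words_upto d n) (fun w => x w * fw g w y j).

Definition fv {d e} (f : 'I_d -> VF e) (v : 'I_d -> tensor d) (N' : nat)
  : 'I_d -> VF e :=
  fun i y j => f i y j + fpoly f N' (v i) y j.

Definition solves_K {d e} (T : R) (K : nat) (g : 'I_d -> VF e) (X : twopar d)
  (Y : R -> point e) : Prop :=
  (forall j, smooth_on T (fun t => Y t j)) /\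
  forall s, in0T T s -> exists D, is_diag_deriv T X s D /\
    forall j, deriv_within T (fun t => Y t j) s
      (Rsum (words_upto d K) (fun w => fw g w (Y s) j * D w)).

Definition solves_good {d e} (T : R) (g : 'I_d -> VF e) (X : twopar d)
  (Y : R -> point e) : Prop :=
  exists K : nat,
    (forall s D, in0T T s -> is_diag_deriv T X s D -> in_LN K D) /\
    solves_K T K g X Y.

(* Main.v *)
Require Import Defs.
From Stdlib Require Import Reals Lra FunctionalExtensionality Classical IndefiniteDescription.
From Coquelicot Require Import Coquelicot.
From mathcomp Require Import all_boot.
Set Implicit Arguments.
Unset Strict Implicit.
Local Open Scope R_scope.

Section RsumLemmas.
Lemma Rsum_nil {A} (F : A -> R) : Rsum [::] F = 0. Proof. by []. Qed.
Lemma Rsum_cons {A} (a : A) s F : Rsum (a :: s) F = F a + Rsum s F. Proof. by []. Qed.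
Lemma Rsum_cat {A} (s1 s2 : seq A) F : Rsum (s1 ++ s2) F = Rsum s1 F + Rsum s2 F.
Proof. elim: s1 => [|a s IH] /=; rewrite /Rsum /= -?/(Rsum _ _); [lra|]. rewrite -/(Rsum s F) -/(Rsum (s ++ s2) F) IH; lra. Qed.
Lemma Rsum_map {A B} (g : A -> B) s F : Rsum (map g s) F = Rsum s (fun a => F (g a)).
Proof. by elim: s => [|a s IH] //=; rewrite /Rsum /= -/(Rsum _ _) -/(Rsum _ _) IH. Qed.
Lemma Rsum_flatten {A} (ss : seq (seq A)) F : Rsum (flatten ss) F = Rsum ss (fun s => Rsum s F).
Proof. elim: ss => [|s ss IH] //=. by rewrite Rsum_cat IH. Qed.
Lemma Rsum_ext {A} (s : seq A) F G : (forall a, F a = G a) -> Rsum s F = Rsum s G.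
Proof. move=> H; elim: s => [|a s IH] //. by rewrite !Rsum_cons H IH. Qed.
Lemma Rsum_ext_in {A : eqType} (s : seq A) F G : (forall a, a \in s -> F a = G a) -> Rsum s F = Rsum s G.
Proof. elim: s => [|a s IH] H //. rewrite !Rsum_cons H ?mem_head // IH // => x Hx. apply H. by rewrite in_cons Hx orbT. Qed.
Lemma Rsum_plus {A} (s : seq A) F G : Rsum s (fun a => F a + G a) = Rsum s F + Rsum s G.
Proof. elim: s => [|a s IH]. rewrite !Rsum_nil; lra. rewrite !Rsum_cons IH; lra. Qed.
Lemma Rsum_minus {A} (s : seq A) F G : Rsum s (fun a => F a - G a) = Rsum s F - Rsum s G.
Proof. elim: s => [|a s IH]. rewrite !Rsum_nil; lra. rewrite !Rsum_cons IH; lra. Qed.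
Lemma Rsum_scal_l {A} (s : seq A) c F : Rsum s (fun a => c * F a) = c * Rsum s F.
Proof. elim: s => [|a s IH]. rewrite !Rsum_nil; lra. rewrite !Rsum_cons IH; lra. Qed.
Lemma Rsum_scal_r {A} (s : seq A) c F : Rsum s (fun a => F a * c) = Rsum s F * c.
Proof. elim: s => [|a s IH]. rewrite !Rsum_nil; lra. rewrite !Rsum_cons IH; lra. Qed.
Lemma Rsum_zero {A} (s : seq A) : Rsum s (fun _ => 0) = 0.
Proof. elim: s => [|a s IH] //. rewrite Rsum_cons IH; lra. Qed.
Lemma Rsum_zero_in {A : eqType} (s : seq A) F : (forall a, a \in s -> F a = 0) -> Rsum s F = 0.
Proof. move=> H; rewrite (Rsum_ext_in (G := fun _ => 0)) ?Rsum_zero //. Qed.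
Lemma Rsum_swap {A B} (s : seq A) (t : seq B) F :
  Rsum s (fun a => Rsum t (F a)) = Rsum t (fun b => Rsum s (fun a => F a b)).
Proof.
elim: s => [|a s IH]. by rewrite Rsum_nil Rsum_zero.
by rewrite Rsum_cons IH -Rsum_plus.
Qed.
Lemma Rsum_delta {A : eqType} (s : seq A) (i : A) (F : A -> R) :
  uniq s -> i \in s -> Rsum s (fun j => if j == i then F j else 0) = F i.
Proof.
elim: s => [|a s IH] // /andP[Ha Hu]. rewrite in_cons Rsum_cons.
case: (eqVneq a i) => [<-|Hne] /= Hi.
- rewrite Rsum_zero_in; first lra. move=> x Hx. case: eqP => // E. by subst; rewrite Hx in Ha.
- rewrite IH //; lra.
Qed.
Lemma Rsum_delta_enum (n : nat) (i : 'I_n) F :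
  Rsum (enum 'I_n) (fun j => if j == i then F j else 0) = F i.
Proof. apply Rsum_delta; [apply enum_uniq | by rewrite mem_enum]. Qed.

Lemma Rsum_tri (n : nat) (F : nat -> nat -> R) :
  Rsum (iota 0 n.+1) (fun k => Rsum (iota 0 k.+1) (fun j => F j k)) =
  Rsum (iota 0 n.+1) (fun j => Rsum (iota 0 (n - j).+1) (fun m => F j (j + m)%N)).
Proof.
elim: n => [|n IH]. by rewrite /Rsum /=.
rewrite -(addn1 n.+1) iotaD Rsum_cat IH add0n.
change (iota n.+1 1) with [:: n.+1]. rewrite Rsum_cat Rsum_cons Rsum_nil.
rewrite [X in _ = _ + X]Rsum_cons Rsum_nil subnn.
change (iota 0 1) with [:: 0%N]. rewrite Rsum_cons Rsum_nil addn0.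
rewrite [X in _ = X + _](Rsum_ext_in (G := fun j => Rsum (iota 0 (n - j).+1) (fun m => F j (j + m)%N) + F j n.+1)).
  rewrite Rsum_plus -(addn1 n.+1) iotaD Rsum_cat add0n.
  change (iota n.+1 1) with [:: n.+1]. rewrite !Rsum_cons !Rsum_nil. lra.
move=> j; rewrite mem_iota add0n ltnS => Hj.
rewrite subSn // -addn1 iotaD Rsum_cat add0n.
change (iota (n - j).+1 1) with [:: (n - j).+1]. rewrite Rsum_cons Rsum_nil addnS subnKC; [lra|by case/andP: Hj].
Qed.
End RsumLemmas.
Section Words.
Variable d : nat.
Implicit Types (w u : seq 'I_d).

Lemma Rsum_words_len_S n F : Rsum (words_len d n.+1) F =
  Rsum (enum 'I_d) (fun i => Rsum (words_len d n) (fun w => F (i :: w))).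
Proof. by rewrite /= Rsum_flatten Rsum_map; apply Rsum_ext => i; rewrite Rsum_map. Qed.

Lemma Rsum_words_len_0 F : Rsum (words_len d 0) F = F [::].
Proof. change (words_len d 0) with [:: [::] : seq 'I_d]. rewrite Rsum_cons Rsum_nil; lra. Qed.

Lemma size_words_len n w : w \in words_len d n -> size w = n.
Proof.
elim: n w => [|n IH] w /=; first by rewrite inE => /eqP ->.
move=> /flattenP [s /mapP [i _ ->] /mapP [w' Hw' ->]] /=. by rewrite (IH _ Hw').
Qed.

Lemma words_upto_sum n F : Rsum (words_upto d n) F = Rsum (iota 0 n.+1) (fun m => Rsum (words_len d m) F).
Proof. by rewrite /words_upto Rsum_flatten Rsum_map. Qed.

Lemma mem_words_upto n w : w \in words_upto d n -> (size w <= n)%N.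
Proof.
move=> /flattenP [s /mapP [m Hm ->]] Hw. rewrite (size_words_len Hw).
by move: Hm; rewrite mem_iota add0n ltnS.
Qed.

Lemma words_upto_trunc a n F : (a <= n)%N -> (forall w, (a < size w)%N -> F w = 0) ->
  Rsum (words_upto d n) F = Rsum (words_upto d a) F.
Proof.
move=> Han HF. rewrite !words_upto_sum -(subnKC Han) -[((a + (n - a))%N).+1]addSn iotaD Rsum_cat add0n.
rewrite [X in _ + X = _]Rsum_zero_in; first lra.
move=> m; rewrite mem_iota => /andP [Hm _]. apply Rsum_zero_in => w Hw.
apply HF. by rewrite (size_words_len Hw).
Qed.

Lemma words_len_split k m (H : seq 'I_d -> seq 'I_d -> R) : (k <= m)%N ->
  Rsum (words_len d m) (fun u => H (take k u) (drop k u)) =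
  Rsum (words_len d k) (fun u1 => Rsum (words_len d (m - k)) (H u1)).
Proof.
elim: k m H => [|k IH] m H Hkm.
  rewrite Rsum_words_len_0 subn0. apply Rsum_ext => u. by rewrite take0 drop0.
case: m Hkm => [|m] // Hkm. rewrite !Rsum_words_len_S subSS. apply Rsum_ext => i.
rewrite -(IH m (fun a b => H (i :: a) b)) //.
Qed.

Lemma Rsum_words_upto_tone n (G : seq 'I_d -> R) :
  Rsum (words_upto d n) (fun w => tone w * G w) = G [::].
Proof.
rewrite words_upto_sum -addn1 addnC iotaD Rsum_cat. change (iota 0 1) with [:: 0%N].
rewrite Rsum_cons Rsum_nil Rsum_words_len_0 Rsum_zero_in /=; first lra.
move=> m; rewrite mem_iota => /andP [Hm _]. apply Rsum_zero_in => w Hw.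
move: (size_words_len Hw); case: w Hw => [|a w] /= Hw Hs; last lra.
by rewrite -Hs in Hm.
Qed.

Lemma Rsum_words_upto_letter n (i : 'I_d) (G : seq 'I_d -> R) :
  Rsum (words_upto d n) (fun w => letter i w * G w) = if (0 < n)%N then G [:: i] else 0.
Proof.
rewrite words_upto_sum. case: n => [|n].
  change (iota 0 1) with [:: 0%N]. rewrite Rsum_cons Rsum_nil Rsum_words_len_0 /letter /=. lra.
rewrite -addn1 addnC iotaD Rsum_cat. change (iota 0 1) with [:: 0%N].
rewrite Rsum_cons Rsum_nil Rsum_words_len_0.
have -> : letter i [::] = 0 by [].
rewrite add0n -[n.+1]add1n iotaD Rsum_cat. change (iota 1 1) with [:: 1%N].
rewrite Rsum_cons Rsum_nil Rsum_words_len_S.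
rewrite (@Rsum_ext _ _ _ (fun j => if j == i then G [:: j] else 0)).
  rewrite Rsum_delta_enum Rsum_zero_in; first by have -> : (0 < 1 + n)%N = true by []; rewrite /=; lra.
  move=> m; rewrite mem_iota => /andP [Hm _]. apply Rsum_zero_in => w Hw.
  move: (size_words_len Hw); rewrite /letter. case: eqP => [->|] /= Hs; last lra.
  by rewrite -Hs in Hm.
move=> j. rewrite Rsum_words_len_0 /letter.
case: (eqVneq j i) => [->|Hne]; first by rewrite !eqxx; apply Rmult_1_l.
have -> : ([:: j] == [:: i]) = false by apply/eqP => -[E]; rewrite E eqxx in Hne.
lra.
Qed.
End Words.
Definition supp_le {d} (n : nat) (x : tensor d) := forall w : seq 'I_d, (n < size w)%N -> x w = 0.
Definition low_ge {d} (n : nat) (x : tensor d) := forall w : seq 'I_d, (size w < n)%N -> x w = 0.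

Section Tens.
Variable d : nat.
Implicit Types (x y z p q : tensor d) (w u : seq 'I_d).

Lemma tone_ne w : (0 < size w)%N -> @tone d w = 0.
Proof. by case: w. Qed.

Lemma tmul_supp a b x y : supp_le a x -> supp_le b y -> supp_le (a + b) (tmul x y).
Proof.
move=> Hx Hy w Hw. rewrite /tmul. apply Rsum_zero_in => k; rewrite mem_iota add0n ltnS => /andP [_ Hk].
case: (ltnP a k) => Hak.
  rewrite Hx; first lra. by rewrite size_takel.
rewrite Hy; first lra. rewrite size_drop. 
apply: (@leq_trans (size w - a)); last by apply leq_sub2l.
by rewrite ltn_subRL.
Qed.

Lemma tmul_low a b x y : low_ge a x -> low_ge b y -> low_ge (a + b) (tmul x y).
Proof.
move=> Hx Hy w Hw. rewrite /tmul. apply Rsum_zero_in => k; rewrite mem_iota add0n ltnS => /andP [_ Hk].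
case: (ltnP k a) => Hak.
  rewrite Hx; first lra. by rewrite size_takel.
rewrite Hy; first lra. rewrite size_drop ltn_subLR //.
apply: (leq_trans Hw). by rewrite leq_add2r.
Qed.

Lemma tmul_one_r x w : tmul x tone w = x w.
Proof.
rewrite /tmul -addn1 iotaD Rsum_cat add0n. change (iota (size w) 1) with [:: size w].
rewrite Rsum_cons Rsum_nil take_size drop_size Rsum_zero_in /=; first lra.
move=> k; rewrite mem_iota add0n => /andP [_ Hk]. rewrite tone_ne; first lra.
by rewrite size_drop subn_gt0.
Qed.

Lemma tmul_one_l x w : tmul tone x w = x w.
Proof.
rewrite /tmul -add1n iotaD Rsum_cat add0n. change (iota 0 1) with [:: 0%N].
rewrite Rsum_cons Rsum_nil take0 drop0 Rsum_zero_in /=; first lra.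
move=> k; rewrite mem_iota => /andP [Hk1 Hk2]. rewrite tone_ne; first lra.
by rewrite size_takel.
Qed.

Lemma tmul_assoc x y z w : tmul (tmul x y) z w = tmul x (tmul y z) w.
Proof.
rewrite {1}/tmul.
pose F := fun j k => x (take j w) * y (take (k - j) (drop j w)) * z (drop (k - j) (drop j w)).
rewrite (@Rsum_ext_in _ _ _ (fun k => Rsum (iota 0 k.+1) (fun j => F j k))).
  rewrite Rsum_tri /tmul. apply Rsum_ext => j. rewrite size_drop -Rsum_scal_l.
  apply Rsum_ext => m. rewrite /F addKn; lra.
move=> k; rewrite mem_iota add0n ltnS => /andP [_ Hk].
rewrite /tmul size_takel // -Rsum_scal_r. apply Rsum_ext_in => j.
rewrite mem_iota add0n ltnS => /andP [_ Hj].
rewrite /F take_takel // take_drop drop_drop subnK //.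
Qed.

Lemma key_reindex a b n p q (G : seq 'I_d -> R) :
  supp_le a p -> supp_le b q -> (a + b <= n)%N ->
  Rsum (words_upto d n) (fun u => tmul p q u * G u) =
  Rsum (words_upto d a) (fun u1 => Rsum (words_upto d b) (fun u2 => p u1 * q u2 * G (u1 ++ u2))).
Proof.
move=> Hp Hq Hn.
pose H := fun u1 u2 => p u1 * q u2 * G (u1 ++ u2).
transitivity (Rsum (iota 0 n.+1) (fun m => Rsum (iota 0 m.+1) (fun k =>
   Rsum (words_len d k) (fun u1 => Rsum (words_len d (m - k)) (H u1))))).
  rewrite words_upto_sum. apply Rsum_ext => m.
  transitivity (Rsum (words_len d m) (fun u => Rsum (iota 0 m.+1) (fun k => H (take k u) (drop k u)))).
    apply Rsum_ext_in => u Hu. rewrite /tmul (size_words_len Hu) -Rsum_scal_r.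
    apply Rsum_ext => k. by rewrite /H cat_take_drop.
  rewrite Rsum_swap. apply Rsum_ext_in => k; rewrite mem_iota add0n ltnS => /andP [_ Hk].
  by rewrite words_len_split.
rewrite Rsum_tri.
transitivity (Rsum (words_upto d n) (fun u1 => Rsum (words_upto d (n - size u1)) (H u1))).
  rewrite words_upto_sum. apply Rsum_ext => k.
  under Rsum_ext => m do rewrite addKn.
  rewrite -Rsum_swap. apply Rsum_ext_in => u1 Hu1. by rewrite words_upto_sum (size_words_len Hu1).
rewrite (words_upto_trunc (a := a)).
- apply Rsum_ext_in => u1 Hu1. apply words_upto_trunc.
  + rewrite leq_subRL; last by apply: (leq_trans (mem_words_upto Hu1)); apply: (leq_trans _ Hn); apply leq_addr.
    apply: (leq_trans _ Hn). by rewrite leq_add2r (mem_words_upto Hu1).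
  + move=> u2 Hu2. by rewrite /H Hq //; lra.
- apply: (leq_trans _ Hn); apply leq_addr.
- move=> u1 Hu1. apply Rsum_zero_in => u2 _. by rewrite /H Hp //; lra.
Qed.
End Tens.
Lemma exd_plus (f g : R -> R) x : ex_derive f x -> ex_derive g x -> ex_derive (fun t => f t + g t) x.
Proof. exact: ex_derive_plus. Qed.
Lemma exd_mult (f g : R -> R) x : ex_derive f x -> ex_derive g x -> ex_derive (fun t => f t * g t) x.
Proof. exact: ex_derive_mult. Qed.
Lemma exd_const (c : R) x : ex_derive (fun _ : R => c) x.
Proof. exact: ex_derive_const. Qed.
Lemma exd_scal (f : R -> R) c x : ex_derive f x -> ex_derive (fun t => c * f t) x.
Proof. exact: ex_derive_scal. Qed.

Section Smooth.
Variable e : nat.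
Implicit Types (h g : point e -> R) (y z : point e).

Definition Csm h := forall l : seq 'I_e, continuous_Re (iter_pd l h) /\
  forall i y, ex_derive (fun t => iter_pd l h (shift y i t)) 0.

Lemma shift0 y i : shift y i 0 = y.
Proof. apply functional_extensionality => k. rewrite /shift. case: eqP => _ //; lra. Qed.

Lemma shift_same y i a b : shift (shift y i a) i b = shift y i (a + b).
Proof. apply functional_extensionality => k. rewrite /shift. case: eqP => _ //; lra. Qed.

Lemma shift_comm y k m a b : k != m -> shift (shift y k a) m b = shift (shift y m b) k a.
Proof.
move=> Hkm. apply functional_extensionality => c. rewrite /shift.
case: (eqVneq c m) => [Ecm|Hcm]; case: (eqVneq c k) => [Eck|Hck] //=.
by subst; rewrite eqxx in Hkm.
Qed.

Lemma iter_pd_ext l g h : (forall y, g y = h y) -> iter_pd l g = iter_pd l h.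
Proof. by move=> H; rewrite (functional_extensionality _ _ H). Qed.

Lemma Csm_ext g h : (forall y, g y = h y) -> Csm g -> Csm h.
Proof. by move=> H; rewrite (functional_extensionality _ _ H). Qed.

Lemma Csm_pd i h : Csm h -> Csm (pd i h).
Proof. move=> H l. have := H (rcons l i). by rewrite /iter_pd foldr_rcons. Qed.

Lemma Csm_iter_pd l h : Csm h -> Csm (iter_pd l h).
Proof. elim: l => [|i l IH] //= Hh. apply Csm_pd. by apply IH. Qed.

Lemma cont_const c : continuous_Re (fun _ : point e => c).
Proof. move=> y eps He. exists 1; split; [lra|]. move=> z _. rewrite Rminus_eq_0 Rabs_R0; lra. Qed.

Lemma cont_plus F G : continuous_Re F -> continuous_Re G -> continuous_Re (fun y => F y + G y).
Proof.
move=> HF HG y eps He.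
have [d1 [Hd1 H1]] := HF y (eps/2) ltac:(lra).
have [d2 [Hd2 H2]] := HG y (eps/2) ltac:(lra).
exists (Rmin d1 d2); split; first by apply Rmin_pos.
move=> z Hz.
have Hz1 : forall k, Rabs (z k - y k) < d1 by move=> k; have := Hz k; have := Rmin_l d1 d2; lra.
have Hz2 : forall k, Rabs (z k - y k) < d2 by move=> k; have := Hz k; have := Rmin_r d1 d2; lra.
have := H1 z Hz1; have := H2 z Hz2.
have -> : F z + G z - (F y + G y) = (F z - F y) + (G z - G y) by ring.
have := Rabs_triang (F z - F y) (G z - G y). lra.
Qed.

Lemma cont_mult F G : continuous_Re F -> continuous_Re G -> continuous_Re (fun y => F y * G y).
Proof.
move=> HF HG y eps He.
remember (Rabs (F y)) as A eqn:EA. remember (Rabs (G y)) as B eqn:EB.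
have HA : 0 <= A by rewrite EA; apply Rabs_pos.
have HB : 0 <= B by rewrite EB; apply Rabs_pos.
have [d1 [Hd1 H1]] := HF y (eps / (2 * (B + 1))) ltac:(apply Rdiv_lt_0_compat; lra).
have [d2 [Hd2 H2]] := HG y (Rmin 1 (eps / (2 * (A + 1)))) ltac:(apply Rmin_pos; [lra| apply Rdiv_lt_0_compat; lra]).
exists (Rmin d1 d2); split; first by apply Rmin_pos.
move=> z Hz.
have Hz1 : forall k, Rabs (z k - y k) < d1 by move=> k; have := Hz k; have := Rmin_l d1 d2; lra.
have Hz2 : forall k, Rabs (z k - y k) < d2 by move=> k; have := Hz k; have := Rmin_r d1 d2; lra.
have E1 := H1 z Hz1; have E2 := H2 z Hz2.
have E2a : Rabs (G z - G y) < 1 by have := Rmin_l 1 (eps / (2 * (A + 1))); lra.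
have E2b : Rabs (G z - G y) < eps / (2 * (A + 1)) by have := Rmin_r 1 (eps / (2 * (A + 1))); lra.
have HGz : Rabs (G z) <= B + 1.
  have -> : G z = G y + (G z - G y) by ring.
  have := Rabs_triang (G y) (G z - G y). lra.
have -> : F z * G z - F y * G y = (F z - F y) * G z + F y * (G z - G y) by ring.
apply: (Rle_lt_trans _ _ _ (Rabs_triang _ _)). rewrite !Rabs_mult.
have T1 : Rabs (F z - F y) * Rabs (G z) <= eps / (2 * (B + 1)) * (B + 1).
  apply Rmult_le_compat; try apply Rabs_pos; lra.
have T2 : Rabs (F y) * Rabs (G z - G y) <= (A + 1) * (eps / (2 * (A + 1))).
  apply Rmult_le_compat; try apply Rabs_pos; lra.
have T1' : eps / (2 * (B + 1)) * (B + 1) = eps / 2 by field; lra.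
have T2' : (A + 1) * (eps / (2 * (A + 1))) = eps / 2 by field; lra.
have T3 : Rabs (F z - F y) * Rabs (G z) < eps / 2.
  apply: (Rle_lt_trans _ (Rabs (F z - F y) * (B + 1))).
    apply Rmult_le_compat_l; [apply Rabs_pos|lra].
  rewrite -T1'. apply Rmult_lt_compat_r; lra.
lra.
Qed.

Lemma pd_const c i y : pd i (fun _ : point e => c) y = 0.
Proof. by rewrite /pd Derive_const. Qed.

Lemma iter_pd_const c l : iter_pd l (fun _ : point e => c) = (fun _ => if l is [::] then c else 0).
Proof.
elim: l => [|i l IH] //=. rewrite IH. apply functional_extensionality => y. by rewrite pd_const.
Qed.

Lemma Csm_const c : Csm (fun _ => c).
Proof. move=> l. rewrite iter_pd_const. split; [apply cont_const|move=> *; apply exd_const]. Qed.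

Lemma pd_plus i g h y :
  ex_derive (fun t => g (shift y i t)) 0 -> ex_derive (fun t => h (shift y i t)) 0 ->
  pd i (fun z => g z + h z) y = pd i g y + pd i h y.
Proof. move=> Hg Hh. rewrite /pd. by rewrite (Derive_plus (fun t => g (shift y i t)) (fun t => h (shift y i t))). Qed.

Lemma pd_mult i g h y :
  ex_derive (fun t => g (shift y i t)) 0 -> ex_derive (fun t => h (shift y i t)) 0 ->
  pd i (fun z => g z * h z) y = pd i g y * h y + g y * pd i h y.
Proof. move=> Hg Hh. rewrite /pd (Derive_mult (fun t => g (shift y i t)) (fun t => h (shift y i t))) //. by rewrite shift0. Qed.

Lemma pd_scal i c h y : pd i (fun z => c * h z) y = c * pd i h y.
Proof. by rewrite /pd Derive_scal. Qed.

Lemma iter_pd_plus l g h :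
  (forall l', (size l' < size l)%N -> forall i y, ex_derive (fun t => iter_pd l' g (shift y i t)) 0) ->
  (forall l', (size l' < size l)%N -> forall i y, ex_derive (fun t => iter_pd l' h (shift y i t)) 0) ->
  forall y, iter_pd l (fun z => g z + h z) y = iter_pd l g y + iter_pd l h y.
Proof.
elim: l => [|i l IH] Hg Hh y //.
change (pd i (iter_pd l (fun z => g z + h z)) y = pd i (iter_pd l g) y + pd i (iter_pd l h) y).
have E : iter_pd l (fun z => g z + h z) = fun z => iter_pd l g z + iter_pd l h z.
  apply functional_extensionality; apply IH => l' Hl'; [apply Hg|apply Hh]; apply: (leq_trans Hl'); by [].
rewrite E. apply pd_plus; [apply Hg|apply Hh]; by [].
Qed.

Lemma Csm_plus g h : Csm g -> Csm h -> Csm (fun y => g y + h y).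
Proof.
move=> Hg Hh l.
have E : iter_pd l (fun z => g z + h z) = fun y => iter_pd l g y + iter_pd l h y.
  apply functional_extensionality; apply iter_pd_plus => l' _; [apply Hg|apply Hh].
rewrite E; split; first by apply cont_plus; [apply Hg|apply Hh].
move=> i y; apply exd_plus; [apply Hg|apply Hh].
Qed.

Lemma Csm_mult g h : Csm g -> Csm h -> Csm (fun y => g y * h y).
Proof.
suff: forall n l, (size l <= n)%N -> forall g h, Csm g -> Csm h ->
   continuous_Re (iter_pd l (fun y => g y * h y)) /\
   forall i y, ex_derive (fun t => iter_pd l (fun y => g y * h y) (shift y i t)) 0.
  move=> H Hg Hh l. by apply (H (size l)).
clear g h; elim => [|n IH] l Hl g h Hg Hh.
  case: l Hl => // _ /=. split.
    apply cont_mult; [apply (Hg [::])|apply (Hh [::])].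
  move=> i y; apply exd_mult; [apply (Hg [::])|apply (Hh [::])].
case: (leqP (size l) n) => Hln; first by apply IH.
case/lastP: l Hl Hln => [|l' i] //. rewrite size_rcons ltnS => Hl; rewrite ltnS => Hln.
have Hl' : size l' = n by apply/eqP; rewrite eqn_leq Hl Hln.
have E : iter_pd (rcons l' i) (fun y => g y * h y) =
   fun y => iter_pd l' (fun z => pd i g z * h z) y + iter_pd l' (fun z => g z * pd i h z) y.
  rewrite /iter_pd foldr_rcons -/(iter_pd _ _).
  apply functional_extensionality => y.
  rewrite (iter_pd_ext l' (h := fun z => pd i g z * h z + g z * pd i h z)); last first.
    move=> z; apply pd_mult; [apply (Hg [::])|apply (Hh [::])].
  apply iter_pd_plus => l'' Hl''; have Hs : (size l'' <= n)%N by rewrite -Hl' ltnW.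
  - exact: (IH l'' Hs (pd i g) h (Csm_pd i Hg) Hh).2.
  - exact: (IH l'' Hs g (pd i h) Hg (Csm_pd i Hh)).2.
have [C1 D1] := IH l' ltac:(by rewrite Hl') (pd i g) h (Csm_pd i Hg) Hh.
have [C2 D2] := IH l' ltac:(by rewrite Hl') g (pd i h) Hg (Csm_pd i Hh).
rewrite E; split; first by apply cont_plus.
move=> j y; apply exd_plus; [apply D1|apply D2].
Qed.

Lemma Csm_scal c h : Csm h -> Csm (fun y => c * h y).
Proof. move=> H. apply Csm_mult => //. apply Csm_const. Qed.

Lemma Csm_Rsum {A} (s : seq A) (F : A -> point e -> R) :
  (forall a, Csm (F a)) -> Csm (fun y => Rsum s (fun a => F a y)).
Proof.
move=> H; elim: s => [|a s IH]. apply (Csm_ext (g := fun _ => 0)) => //. apply Csm_const.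
apply (Csm_ext (g := fun y => F a y + Rsum s (fun a => F a y))) => //.
by apply Csm_plus.
Qed.

Lemma pd_Rsum {A} (s : seq A) (F : A -> point e -> R) i y :
  (forall a, Csm (F a)) -> pd i (fun z => Rsum s (fun a => F a z)) y = Rsum s (fun a => pd i (F a) y).
Proof.
move=> H; elim: s => [|a s IH]. by rewrite Rsum_nil pd_const.
rewrite Rsum_cons -IH.
rewrite (_ : (fun z => Rsum (a :: s) (fun a0 => F a0 z)) = (fun z => F a z + Rsum s (fun a0 => F a0 z))) //.
apply pd_plus; first by apply (H a [::]).
by apply ((Csm_Rsum s H) [::]).
Qed.

Lemma Csm_coord j : Csm (fun y : point e => y j).
Proof.
have E : forall i, pd i (fun y : point e => y j) = fun _ => if i == j then 1 else 0.
  move=> i; apply functional_extensionality => y. rewrite /pd /shift.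
  case: (eqVneq i j) => [Eij|Hne].
    subst i. apply is_derive_unique. auto_derive => //.
  apply Derive_const.
have Q : forall l, l = [::] \/ exists c, iter_pd l (fun y : point e => y j) = fun _ => c.
  elim => [|i l [->|[c Hc]]]; [by left|right|right].
  - by rewrite /= E; eexists.
  - rewrite /= Hc; exists 0; apply functional_extensionality => y; apply pd_const.
move=> l; case: (Q l) => [->|[c ->]]; last first.
  split; [apply cont_const|move=> *; apply exd_const].
split.
- move=> y eps He. exists eps; split => // z Hz. exact: Hz.
- move=> i y /=. rewrite /shift. case: eqP => _; last by apply exd_const.
  apply exd_plus; [apply exd_const|apply ex_derive_id].
Qed.
End Smooth.
Section Schwarz.
Variable e : nat.
Implicit Types (h g G : point e -> R) (y p : point e).

Lemma pd_at G i : (forall p, ex_derive (fun t => G (shift p i t)) 0) ->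
  forall p u, ex_derive (fun z => G (shift p i z)) u /\
              Derive (fun z => G (shift p i z)) u = pd i G (shift p i u).
Proof.
move=> HG p u.
pose g0 := fun t => G (shift (shift p i u) i t).
have E : forall z, g0 (z - u) = G (shift p i z).
  move=> z; rewrite /g0 shift_same. by replace (u + (z - u)) with z by ring.
have Hg0 : ex_derive g0 (u - u) by replace (u - u) with 0 by ring; apply HG.
have Hl : ex_derive (fun z => z - u) u by auto_derive.
split.
  apply: (ex_derive_ext (fun z => g0 (z - u))) => //. exact: ex_derive_comp.
rewrite -(Derive_ext _ _ _ E) Derive_comp //.
have -> : Derive (fun z => z - u) u = 1 by apply is_derive_unique; auto_derive.
replace (u - u) with 0 by ring. rewrite Rmult_1_l. by [].
Qed.

Lemma abs_help a b d : Rabs a < d / 2 -> Rabs b < d / 2 -> Rabs (a + b) < d.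
Proof. move=> Ha Hb. have := Rabs_triang a b. lra. Qed.

Lemma cont2d F y k m : continuous_Re F ->
  continuity_2d_pt (fun u v => F (shift (shift y k u) m v)) 0 0.
Proof.
move=> HF eps. have [d [Hd H]] := HF y eps (cond_pos eps).
have Hd2 : 0 < d / 2 by lra.
exists (mkposreal _ Hd2) => u v /= Hu Hv.
rewrite !shift0. apply H => c. rewrite /shift.
rewrite Rminus_0_r in Hu. rewrite Rminus_0_r in Hv.
have H0 : Rabs 0 < d by rewrite Rabs_R0.
case: (c == m); case: (c == k).
- replace (y c + u + v - y c) with (u + v) by ring. by apply abs_help.
- replace (y c + v - y c) with v by ring. lra.
- replace (y c + u - y c) with u by ring. lra.
- by rewrite Rminus_eq_0.
Qed.

Lemma pd_comm h k m y : Csm h -> pd k (pd m h) y = pd m (pd k h) y.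
Proof.
move=> Hh.
case: (eqVneq k m) => [->|Hkm] //.
have Hh0 : forall p i, ex_derive (fun t => h (shift p i t)) 0 by move=> p i; apply (Hh [::]).
have Hpm : forall p i, ex_derive (fun t => pd m h (shift p i t)) 0 by move=> p i; apply (Hh [:: m]).
have Hpk : forall p i, ex_derive (fun t => pd k h (shift p i t)) 0 by move=> p i; apply (Hh [:: k]).
pose f2 := fun u v => h (shift (shift y k u) m v).
have L : pd k (pd m h) y = Derive (fun z => Derive (fun t => f2 z t) 0) 0 by [].
have Rr : pd m (pd k h) y = Derive (fun z => Derive (fun t => f2 t z) 0) 0.
  rewrite /pd /f2. apply Derive_ext => z. apply Derive_ext => t. by rewrite shift_comm // eq_sym.
have D1 : forall z v, Derive (fun t => f2 z t) v = pd m h (shift (shift y m v) k z).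
  move=> z v. rewrite /f2 (pd_at (Hh0^~ m) (shift y k z) v).2. by rewrite shift_comm.
have D2 : forall u z, Derive (fun t => f2 t z) u = pd k h (shift (shift y k u) m z).
  move=> u z. rewrite /f2.
  rewrite (Derive_ext _ (fun t => h (shift (shift y m z) k t))); last by move=> t; rewrite shift_comm.
  rewrite (pd_at (Hh0^~ k) (shift y m z) u).2. by rewrite shift_comm // eq_sym.
rewrite L Rr. apply Schwarz.
- exists (mkposreal 1 Rlt_0_1) => u v _ _. split; [|split; [|split]].
  + apply (ex_derive_ext (fun z => h (shift (shift y m v) k z))).
      by move=> z; rewrite shift_comm // eq_sym.
    exact: (pd_at (Hh0^~ k) _ _).1.
  + exact: (pd_at (Hh0^~ m) _ _).1.
  + apply (ex_derive_ext (fun z => pd m h (shift (shift y m v) k z))).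
      by move=> z; rewrite D1.
    exact: (pd_at (Hpm^~ k) _ _).1.
  + apply (ex_derive_ext (fun z => pd k h (shift (shift y k u) m z))).
      by move=> z; rewrite D2.
    exact: (pd_at (Hpk^~ m) _ _).1.
- have E : forall u v, Derive (fun z => Derive (fun t => f2 z t) v) u = iter_pd [:: k; m] h (shift (shift y k u) m v).
    move=> u v. rewrite (Derive_ext _ (fun z => pd m h (shift (shift y m v) k z))); last by move=> z; rewrite D1.
    rewrite (pd_at (Hpm^~ k) _ _).2 /=. by rewrite shift_comm // eq_sym.
  move=> eps. have [dl Hdl] := cont2d y k m (Hh [:: k; m]).1 eps.
  exists dl => u v Hu Hv. rewrite !E. by apply Hdl.
- have E : forall u v, Derive (fun z => Derive (fun t => f2 t z) u) v = iter_pd [:: m; k] h (shift (shift y k u) m v).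
    move=> u v. rewrite (Derive_ext _ (fun z => pd k h (shift (shift y k u) m z))); last by move=> z; rewrite D2.
    by rewrite (pd_at (Hpk^~ m) _ _).2 /=.
  move=> eps. have [dl Hdl] := cont2d y k m (Hh [:: m; k]).1 eps.
  exists dl => u v Hu Hv. rewrite !E. by apply Hdl.
Qed.
End Schwarz.
Section PhiSec.
Variables (d e : nat).
Implicit Types (F : 'I_d -> VF e) (g h G : point e -> R) (x p q : tensor d) (u w : seq 'I_d).

Definition Aop F (i : 'I_d) g : point e -> R :=
  fun y => Rsum (enum 'I_e) (fun k => F i y k * pd k g y).
Definition Phiw F u g := foldr (Aop F) g u.
Definition Phi F (n : nat) x g : point e -> R :=
  fun y => Rsum (words_upto d n) (fun u => x u * Phiw F u g y).
Definition fieldsC F := forall i j, Csm (fun y => F i y j).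

Lemma Aop_Csm F i g : fieldsC F -> Csm g -> Csm (Aop F i g).
Proof.
move=> HF Hg. apply Csm_Rsum => k. apply Csm_mult; [apply HF|by apply Csm_pd].
Qed.

Lemma Phiw_Csm F u g : fieldsC F -> Csm g -> Csm (Phiw F u g).
Proof. move=> HF Hg; elim: u => [|i u IH] //=. by apply Aop_Csm. Qed.

Lemma Phi_Csm F n x g : fieldsC F -> Csm g -> Csm (Phi F n x g).
Proof. move=> HF Hg. apply Csm_Rsum => u. apply Csm_scal. by apply Phiw_Csm. Qed.

Lemma pd_lin {A} (s : seq A) (c : A -> R) (Gs : A -> point e -> R) k y :
  (forall a, Csm (Gs a)) ->
  pd k (fun z => Rsum s (fun a => c a * Gs a z)) y = Rsum s (fun a => c a * pd k (Gs a) y).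
Proof.
move=> HG. rewrite pd_Rsum; last by move=> a; apply Csm_scal.
apply Rsum_ext => a. by rewrite pd_scal.
Qed.

Lemma Aop_lin {A} F i (s : seq A) (c : A -> R) (Gs : A -> point e -> R) y :
  (forall a, Csm (Gs a)) ->
  Aop F i (fun z => Rsum s (fun a => c a * Gs a z)) y = Rsum s (fun a => c a * Aop F i (Gs a) y).
Proof.
move=> HG. rewrite /Aop.
rewrite (@Rsum_ext _ _ _ (fun k => Rsum s (fun a => c a * (F i y k * pd k (Gs a) y)))).
  rewrite Rsum_swap. apply Rsum_ext => a. rewrite -Rsum_scal_l. by [].
move=> k. rewrite pd_lin // -Rsum_scal_l. apply Rsum_ext => a; ring.
Qed.

Lemma Phiw_lin {A} F u (s : seq A) (c : A -> R) (Gs : A -> point e -> R) y :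
  fieldsC F -> (forall a, Csm (Gs a)) ->
  Phiw F u (fun z => Rsum s (fun a => c a * Gs a z)) y = Rsum s (fun a => c a * Phiw F u (Gs a) y).
Proof.
move=> HF HG. elim: u y => [|i u IH] y //=.
rewrite (_ : Phiw F u _ = fun z => Rsum s (fun a => c a * Phiw F u (Gs a) z)).
  apply Aop_lin => a. by apply Phiw_Csm.
apply functional_extensionality => z. by apply IH.
Qed.

Lemma pd_coord k j y : pd k (fun z : point e => z j) y = if k == j then 1 else 0.
Proof.
rewrite /pd /shift. case: (eqVneq k j) => [Ekj|Hne].
  subst k. apply is_derive_unique. auto_derive => //.
apply Derive_const.
Qed.

Lemma Aop_coord F i j y : Aop F i (fun z => z j) y = F i y j.
Proof.
rewrite /Aop (@Rsum_ext _ _ _ (fun k => if k == j then F i y k else 0)).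
  by rewrite Rsum_delta_enum.
move=> k. rewrite pd_coord. case: eqP => _; ring.
Qed.

Lemma fw_Phiw F w y j : fw F w y j = Phiw F w (fun z => z j) y.
Proof.
elim: w y => [|i w IH] y //. case: w IH => [|i' w'] IH.
  by rewrite /= Aop_coord.
rewrite [LHS]/= /tri. change (Phiw F [:: i, i' & w'] (fun z => z j) y) with
  (Aop F i (Phiw F (i' :: w') (fun z => z j)) y).
rewrite /Aop. apply Rsum_ext => k. f_equal. f_equal.
apply functional_extensionality => z. by apply IH.
Qed.

Lemma supp_le_mono n m x : supp_le n x -> (n <= m)%N -> supp_le m x.
Proof. move=> H Hnm w Hw. apply H. exact: (leq_ltn_trans Hnm Hw). Qed.

Lemma Phi_trunc F a b x g y : supp_le a x -> supp_le b x -> Phi F a x g y = Phi F b x g y.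
Proof.
move=> Ha Hb. rewrite /Phi.
wlog Hab : a b Ha Hb / (a <= b)%N.
  move=> H. case: (leqP a b) => Hab; first by apply H.
  symmetry; apply H => //. by apply ltnW.
symmetry. apply words_upto_trunc => // u Hu. rewrite Ha //; ring.
Qed.

Lemma Phi_mult F a b n p q g y : fieldsC F -> Csm g ->
  supp_le a p -> supp_le b q -> (a + b <= n)%N ->
  Phi F n (tmul p q) g y = Phi F a p (Phi F b q g) y.
Proof.
move=> HF Hg Hp Hq Hn. rewrite /Phi (@key_reindex d a b n p q (fun u => Phiw F u g y) Hp Hq Hn).
apply Rsum_ext => u1.
rewrite (@Phiw_lin _ F u1 (words_upto d b) q (fun u2 => Phiw F u2 g)) //; last first.
  move=> u2; by apply Phiw_Csm.
rewrite -Rsum_scal_l. apply Rsum_ext => u2. rewrite /Phiw foldr_cat. ring.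
Qed.

Lemma Phi_add F n x1 x2 g y : Phi F n (tadd x1 x2) g y = Phi F n x1 g y + Phi F n x2 g y.
Proof. rewrite /Phi -Rsum_plus. apply Rsum_ext => u. rewrite /tadd; ring. Qed.

Lemma Phi_scale F n c x g y : Phi F n (tscale c x) g y = c * Phi F n x g y.
Proof. rewrite /Phi -Rsum_scal_l. apply Rsum_ext => u. rewrite /tscale; ring. Qed.

Lemma Phi_bracket F n p q g y : Phi F n (tbracket p q) g y = Phi F n (tmul p q) g y - Phi F n (tmul q p) g y.
Proof. rewrite /Phi -Rsum_minus. apply Rsum_ext => u. rewrite /tbracket; ring. Qed.

Lemma Phi_letter F n i g y : Phi F n (letter i) g y = if (0 < n)%N then Aop F i g y else 0.
Proof. by rewrite /Phi Rsum_words_upto_letter. Qed.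

Lemma Phi_tone F n g y : Phi F n tone g y = g y.
Proof. by rewrite /Phi Rsum_words_upto_tone. Qed.

Lemma Phi_ext F n x1 x2 g y : (forall w, x1 w = x2 w) -> Phi F n x1 g y = Phi F n x2 g y.
Proof. move=> H. rewrite /Phi. apply Rsum_ext => u. by rewrite H. Qed.
End PhiSec.
Section LieSec.
Variable d : nat.
Implicit Types (x y p q : tensor d).

Lemma lie_nil p : is_lie p -> p [::] = 0.
Proof.
elim => //=.
- move=> p' q' _ H1 _ H2. rewrite /tadd H1 H2; ring.
- move=> c p' _ H. rewrite /tscale H; ring.
- move=> p' q' _ _ _ _. rewrite /tbracket /tmul /Rsum /=; ring.
- move=> p' q' E _ H. by rewrite -E.
Qed.

Lemma supp_tadd a b x y : supp_le a x -> supp_le b y -> supp_le (maxn a b) (tadd x y).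
Proof.
move=> Ha Hb w Hw. rewrite /tadd Ha ?Hb; first ring.
- apply: leq_ltn_trans Hw. apply leq_maxr.
- apply: leq_ltn_trans Hw. apply leq_maxl.
Qed.

Lemma supp_tscale a c x : supp_le a x -> supp_le a (tscale c x).
Proof. move=> Ha w Hw. rewrite /tscale Ha //; ring. Qed.

Lemma supp_tbracket a b p q : supp_le a p -> supp_le b q -> supp_le (a + b) (tbracket p q).
Proof.
move=> Ha Hb w Hw. rewrite /tbracket (tmul_supp Ha Hb) // (tmul_supp Hb Ha); first ring.
by rewrite addnC.
Qed.

Lemma supp_ext a p q : (forall w, p w = q w) -> supp_le a p -> supp_le a q.
Proof. move=> E H w Hw. rewrite -E. by apply H. Qed.

Lemma lie_supp p : is_lie p -> exists n, supp_le n p.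
Proof.
elim.
- move=> i. exists 1%N => w Hw. rewrite /letter. case: eqP => // E. by rewrite E in Hw.
- move=> p' q' _ [a Ha] _ [b Hb]. exists (maxn a b). by apply supp_tadd.
- move=> c p' _ [a Ha]. exists a. by apply supp_tscale.
- move=> p' q' _ [a Ha] _ [b Hb]. exists (a + b)%N. by apply supp_tbracket.
- move=> p' q' E _ [a Ha]. exists a. by apply: supp_ext Ha.
Qed.
End LieSec.

Section LiePhi.
Variables (d e : nat).

Lemma comp_first_order (P Q : 'I_e -> point e -> R) g y :
  (forall m, Csm (Q m)) -> Csm g ->
  Rsum (enum 'I_e) (fun k => P k y * pd k (fun z => Rsum (enum 'I_e) (fun m => Q m z * pd m g z)) y) =
  Rsum (enum 'I_e) (fun m => Rsum (enum 'I_e) (fun k => P k y * pd k (Q m) y) * pd m g y) +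
  Rsum (enum 'I_e) (fun k => Rsum (enum 'I_e) (fun m => P k y * Q m y * pd k (pd m g) y)).
Proof.
move=> HQ Hg.
rewrite (@Rsum_ext _ _ _ (fun k => Rsum (enum 'I_e) (fun m => P k y * pd k (Q m) y * pd m g y) +
    Rsum (enum 'I_e) (fun m => P k y * Q m y * pd k (pd m g) y))).
  rewrite Rsum_plus. f_equal. rewrite Rsum_swap. apply Rsum_ext => m. by rewrite -Rsum_scal_r.
move=> k. rewrite pd_Rsum; last by move=> m; apply Csm_mult => //; apply Csm_pd.
rewrite -Rsum_plus -Rsum_scal_l. apply Rsum_ext => m.
rewrite pd_mult; [ring|apply (HQ m [::])|apply ((Csm_pd m Hg) [::])].
Qed.

Lemma sym_second (P Q : 'I_e -> point e -> R) g y : Csm g ->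
  Rsum (enum 'I_e) (fun k => Rsum (enum 'I_e) (fun m => P k y * Q m y * pd k (pd m g) y)) =
  Rsum (enum 'I_e) (fun k => Rsum (enum 'I_e) (fun m => Q k y * P m y * pd k (pd m g) y)).
Proof.
move=> Hg. rewrite [RHS]Rsum_swap. apply Rsum_ext => k. apply Rsum_ext => m.
rewrite (pd_comm m k y Hg). ring.
Qed.

Variable F : 'I_d -> VF e.
Hypothesis HF : fieldsC F.

Lemma Phi_trunc_M n M x g y : supp_le n x -> (n <= M)%N -> Phi F n x g y = Phi F M x g y.
Proof. move=> H HM. apply Phi_trunc => //. exact: supp_le_mono H HM. Qed.

Lemma Phi_lie : forall p : tensor d, is_lie p -> forall n, supp_le n p -> forall g, Csm g -> forall y,
  Phi F n p g y = Rsum (enum 'I_e) (fun k => Phi F n p (fun z => z k) y * pd k g y).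
Proof.
move=> p0 Hp0; elim: Hp0; clear p0.
- move=> i n _ g Hg y. rewrite Phi_letter.
  under Rsum_ext => k do rewrite Phi_letter.
  case: (0 < n)%N.
  + rewrite {1}/Aop. apply Rsum_ext => k. by rewrite Aop_coord.
  + rewrite (@Rsum_ext _ _ _ (fun _ => 0)) ?Rsum_zero // => k; ring.
- move=> p q Hp IHp Hq IHq n Hn g Hg y.
  have [a Ha] := lie_supp Hp. have [b Hb] := lie_supp Hq.
  set M := maxn n (maxn a b).
  have HnM : (n <= M)%N by apply leq_maxl.
  have HaM : (a <= M)%N by apply: leq_trans (leq_maxr _ _); apply leq_maxl.
  have HbM : (b <= M)%N by apply: leq_trans (leq_maxr _ _); apply leq_maxr.
  rewrite (Phi_trunc_M _ _ Hn HnM).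
  under Rsum_ext => k do rewrite (Phi_trunc_M _ _ Hn HnM).
  rewrite Phi_add (IHp M (supp_le_mono Ha HaM)) // (IHq M (supp_le_mono Hb HbM)) // -Rsum_plus.
  apply Rsum_ext => k. rewrite Phi_add; ring.
- move=> c p Hp IHp n Hn g Hg y.
  have [a Ha] := lie_supp Hp.
  set M := maxn n a.
  have HnM : (n <= M)%N by apply leq_maxl.
  have HaM : (a <= M)%N by apply leq_maxr.
  rewrite (Phi_trunc_M _ _ Hn HnM).
  under Rsum_ext => k do rewrite (Phi_trunc_M _ _ Hn HnM).
  rewrite Phi_scale (IHp M (supp_le_mono Ha HaM)) // -Rsum_scal_l.
  apply Rsum_ext => k. rewrite Phi_scale; ring.
- move=> p q Hp IHp Hq IHq n Hn g Hg y.
  have [a Ha] := lie_supp Hp. have [b Hb] := lie_supp Hq.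
  set M := (n + (a + b))%N.
  have HnM : (n <= M)%N by apply leq_addr.
  have HabM : (a + b <= M)%N by apply leq_addl.
  have HbaM : (b + a <= M)%N by rewrite addnC.
  rewrite (Phi_trunc_M _ _ Hn HnM).
  under Rsum_ext => k do rewrite (Phi_trunc_M _ _ Hn HnM).
  have EM : forall k, Phi F M (tbracket p q) (fun z => z k) y =
     Phi F a p (Phi F b q (fun z => z k)) y - Phi F b q (Phi F a p (fun z => z k)) y.
    move=> k. by rewrite Phi_bracket (Phi_mult y HF (Csm_coord k) Ha Hb HabM) (Phi_mult y HF (Csm_coord k) Hb Ha HbaM).
  under Rsum_ext => k do rewrite EM.
  rewrite Phi_bracket (Phi_mult y HF Hg Ha Hb HabM) (Phi_mult y HF Hg Hb Ha HbaM).
  set P := fun k => Phi F a p (fun z => z k).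
  set Q := fun k => Phi F b q (fun z => z k).
  have HPc : forall k, Csm (P k) by move=> k; apply Phi_Csm => //; apply Csm_coord.
  have HQc : forall k, Csm (Q k) by move=> k; apply Phi_Csm => //; apply Csm_coord.
  have EQg : Phi F b q g = fun z => Rsum (enum 'I_e) (fun m => Q m z * pd m g z).
    apply functional_extensionality => z. by apply IHq.
  have EPg : Phi F a p g = fun z => Rsum (enum 'I_e) (fun m => P m z * pd m g z).
    apply functional_extensionality => z. by apply IHp.
  rewrite EQg EPg (IHp a Ha) ?(IHq b Hb); try (apply Csm_Rsum => m; apply Csm_mult => //; by apply Csm_pd).
  rewrite (@comp_first_order P Q g y HQc Hg) (@comp_first_order Q P g y HPc Hg) (@sym_second P Q g y Hg).
  have E1 : forall m, Rsum (enum 'I_e) (fun k => P k y * pd k (Q m) y) = Phi F a p (Q m) y.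
    move=> m. by rewrite (IHp a Ha _ (HQc m)).
  have E2 : forall m, Rsum (enum 'I_e) (fun k => Q k y * pd k (P m) y) = Phi F b q (P m) y.
    move=> m. by rewrite (IHq b Hb _ (HPc m)).
  under Rsum_ext => m do rewrite E1.
  rewrite (@Rsum_ext _ (enum 'I_e) (fun m => Rsum (enum 'I_e) (fun k => Q k y * pd k (P m) y) * pd m g y) (fun m => Phi F b q (P m) y * pd m g y)); last by move=> m; rewrite E2.
  have cancel : forall A B S : R, A + S - (B + S) = A - B by move=> *; ring.
  rewrite cancel -Rsum_minus. apply Rsum_ext => m. rewrite /P /Q. ring.
- move=> p q E Hp IHp n Hn g Hg y.
  rewrite (Phi_ext _ _ _ _ (fun w => esym (E w))).
  under Rsum_ext => k do rewrite (Phi_ext _ _ _ _ (fun w => esym (E w))).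
  apply IHp => //. apply: supp_ext Hn => w. by rewrite E.
Qed.
End LiePhi.
Section Trans.
Variables (d e : nat) (f : 'I_d -> VF e) (v : 'I_d -> tensor d) (N' : nat).
Hypothesis Hf : fieldsC f.
Hypothesis Hv : forall i, is_lie (v i).
Hypothesis HvN : forall i, supp_le N' (v i).
Hypothesis HN'1 : (1 <= N')%N.

Definition Pw (w : seq 'I_d) : tensor d := tprod [seq tadd (letter i) (v i) | i <- w].

Lemma supp_X i : supp_le N' (tadd (letter i) (v i)).
Proof.
apply: (supp_le_mono (n := maxn 1 N')); last by rewrite geq_max HN'1 leqnn.
apply supp_tadd => //. move=> w Hw. rewrite /letter. case: eqP => // E. by rewrite E in Hw.
Qed.

Lemma low_X i : low_ge 1 (tadd (letter i) (v i)).
Proof. move=> w; case: w => // _. rewrite /tadd (lie_nil (Hv i)) /letter /=; ring. Qed.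

Lemma supp_Pw w : supp_le (size w * N') (Pw w).
Proof.
elim: w => [|i w IH] /=.
  move=> u Hu. by rewrite /Pw /= tone_ne.
rewrite mulSn. exact: tmul_supp (@supp_X i) IH.
Qed.

Lemma low_Pw w : low_ge (size w) (Pw w).
Proof.
elim: w => [|i w IH] /=; first by move=> u.
rewrite -add1n. exact: tmul_low (@low_X i) IH.
Qed.

Lemma fpoly_Phi n x y j : fpoly f n x y j = Phi f n x (fun z => z j) y.
Proof. rewrite /fpoly /Phi. apply Rsum_ext => u. by rewrite fw_Phiw. Qed.

Lemma fields_fv : fieldsC (fv f v N').
Proof.
move=> i j. rewrite /fv.
apply (Csm_ext (g := fun y => f i y j + Phi f N' (v i) (fun z => z j) y)).
  move=> y; by rewrite fpoly_Phi.
apply Csm_plus; first by apply Hf. apply Phi_Csm => //. apply Csm_coord.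
Qed.

Lemma trans_Phiw w g y : Csm g -> Phi f (size w * N') (Pw w) g y = Phiw (fv f v N') w g y.
Proof.
move=> Hg. elim: w g Hg y => [|i w IH] g Hg y.
  by rewrite /Pw /= Phi_tone.
rewrite /Pw /= -/(Pw w) mulSn (Phi_mult y Hf Hg (@supp_X i) (@supp_Pw w) (leqnn _)).
have EG : Phi f (size w * N') (Pw w) g = Phiw (fv f v N') w g.
  apply functional_extensionality => z. by apply IH.
rewrite EG Phi_add Phi_letter.
have HN0 : (0 < N')%N by [].
rewrite HN0 (Phi_lie Hf (Hv i) (HvN i)); last by apply Phiw_Csm => //; apply fields_fv.
rewrite /Aop -Rsum_plus. apply Rsum_ext => k. rewrite /fv fpoly_Phi. ring.
Qed.

Lemma translate_expand (D : tensor d) K2 u : supp_le K2 D ->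
  translate_t v D u = Rsum (words_upto d K2) (fun w => D w * Pw w u).
Proof.
move=> HD. rewrite /translate_t -/(Pw _).
rewrite -(@words_upto_trunc d (size u) (maxn (size u) K2)); [|apply leq_maxl|].
  rewrite (@words_upto_trunc d K2 (maxn (size u) K2)) //; first by apply leq_maxr.
  move=> w Hw. rewrite HD //; ring.
move=> w Hw. have := low_Pw Hw. rewrite /Pw => ->. ring.
Qed.

Lemma main_identity (D : tensor d) K1 K2 y j : supp_le K2 D -> supp_le K1 (translate_t v D) ->
  Rsum (words_upto d K1) (fun u => fw f u y j * translate_t v D u) =
  Rsum (words_upto d K2) (fun w => fw (fv f v N') w y j * D w).
Proof.
move=> HD HT.
set B := maxn K1 (K2 * N').
rewrite -(@words_upto_trunc d K1 B); [|apply leq_maxl|]; last first.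
  move=> u Hu. rewrite HT //; ring.
rewrite (@Rsum_ext _ _ _ (fun u => Rsum (words_upto d K2) (fun w => D w * (Pw w u * fw f u y j)))); last first.
  move=> u. rewrite (translate_expand _ HD) -Rsum_scal_l. apply Rsum_ext => w; ring.
rewrite Rsum_swap. apply Rsum_ext_in => w Hw.
rewrite Rsum_scal_l [RHS]Rmult_comm. f_equal.
transitivity (Phi f B (Pw w) (fun z => z j) y).
  rewrite /Phi. apply Rsum_ext => u. by rewrite fw_Phiw.
have HB : (size w * N' <= B)%N.
  apply: leq_trans (leq_maxr _ _). by rewrite leq_mul2r (mem_words_upto Hw) orbT.
rewrite (Phi_trunc _ _ _ (supp_le_mono (@supp_Pw w) HB) (@supp_Pw w)).
by rewrite trans_Phiw ?fw_Phiw //; apply Csm_coord.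
Qed.
End Trans.
Lemma Rsum_rev_iota (k : nat) (G : nat -> R) :
  Rsum (iota 0 k.+1) (fun a => G (k - a)%N) = Rsum (iota 0 k.+1) G.
Proof.
elim: k G => [|k IH] G; first by rewrite /Rsum /=.
have L : Rsum (iota 0 k.+2) (fun a => G (k.+1 - a)%N) = G k.+1 + Rsum (iota 0 k.+1) G.
  rewrite -[(k.+2)%N]add1n iotaD Rsum_cat. change (iota 0 1) with [:: 0%N].
  rewrite Rsum_cons Rsum_nil subn0 add0n -[1%N]addn0 iotaDl Rsum_map.
  rewrite (@Rsum_ext _ _ _ (fun a => G (k - a)%N)); last by move=> a; rewrite add1n subSS.
  rewrite IH. ring.
have Rr : Rsum (iota 0 k.+2) G = Rsum (iota 0 k.+1) G + G k.+1.
  rewrite -[(k.+2)%N]addn1 iotaD Rsum_cat add0n. change (iota k.+1 1) with [:: k.+1].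
  rewrite Rsum_cons Rsum_nil. ring.
rewrite L Rr. ring.
Qed.

Section HomSec.
Variable d : nat.
Hypothesis Hd : (0 < d)%N.
Implicit Types (x p q : tensor d) (u w : seq 'I_d).

Definition hom (k : nat) x : tensor d := fun u => if size u == k then x u else 0.

Lemma lie_zero : is_lie (fun _ : seq 'I_d => 0).
Proof.
apply (lie_ext (p := tscale 0 (letter (Ordinal Hd)))); last by apply lie_scale; apply lie_letter.
move=> w; rewrite /tscale; ring.
Qed.

Lemma lie_tsum {A} (s : seq A) (F : A -> tensor d) : (forall a, is_lie (F a)) ->
  is_lie (fun u => Rsum s (fun a => F a u)).
Proof.
move=> H; elim: s => [|a s IH]; first by apply lie_zero.
apply (lie_ext (p := tadd (F a) (fun u => Rsum s (fun a => F a u)))) => //.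
by apply lie_add.
Qed.

Lemma hom_tmul k p q u : hom k (tmul p q) u = Rsum (iota 0 k.+1) (fun a => tmul (hom a p) (hom (k - a) q) u).
Proof.
rewrite /hom. case: (eqVneq (size u) k) => [Hk|Hk].
  rewrite /tmul Hk.
  under Rsum_ext => a do rewrite /hom.
  rewrite Rsum_swap. apply Rsum_ext_in => j; rewrite mem_iota add0n ltnS => /andP [_ Hj].
  rewrite (@Rsum_ext _ _ _ (fun a => if a == j then p (take j u) * q (drop j u) else 0)).
    rewrite Rsum_delta ?iota_uniq //. by rewrite mem_iota add0n ltnS.
  move=> a. rewrite size_takel ?Hk // size_drop Hk.
  case: (eqVneq j a) => [->|Hja]; [by rewrite eqxx|ring].
apply esym, Rsum_zero_in => a; rewrite mem_iota add0n ltnS => /andP [_ Ha].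
apply Rsum_zero_in => j; rewrite mem_iota add0n ltnS => /andP [_ Hj].
rewrite size_takel // size_drop.
case: (eqVneq j a) => [Eja|Hja]; last by ring.
subst j. case: eqP => [E|_]; last by ring.
exfalso. move/eqP: Hk; apply.
by rewrite -(subnK Hj) -(subnK Ha) E.
Qed.

Lemma hom_lie k p : is_lie p -> is_lie (hom k p).
Proof.
move=> Hp; elim: Hp k => {p}.
- move=> i k. case: (eqVneq k 1%N) => [->|Hk].
    apply (lie_ext (p := letter i)); last by apply lie_letter.
    move=> w. rewrite /hom /letter. case: (eqVneq w [:: i]) => [->|Hw] //=.
    by case: ifP.
  apply (lie_ext (p := fun _ => 0)); last by apply lie_zero.
  move=> w. rewrite /hom /letter. case: (eqVneq w [:: i]) => [->|Hw] /=.
    by rewrite eq_sym (negbTE Hk).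
  by case: ifP.
- move=> p q _ Hp _ Hq k. apply (lie_ext (p := tadd (hom k p) (hom k q))); last by apply lie_add.
  move=> w; rewrite /hom /tadd. case: eqP => _ //; ring.
- move=> c p _ Hp k. apply (lie_ext (p := tscale c (hom k p))); last by apply lie_scale.
  move=> w; rewrite /hom /tscale. case: eqP => _ //; ring.
- move=> p q _ Hp _ Hq k.
  apply (lie_ext (p := fun u => Rsum (iota 0 k.+1) (fun a => tbracket (hom a p) (hom (k - a) q) u))); last first.
    apply lie_tsum => a. by apply lie_bracket.
  move=> u. rewrite /tbracket Rsum_minus.
  have -> : hom k (fun w => tmul p q w - tmul q p w) u = hom k (tmul p q) u - hom k (tmul q p) u.
    rewrite /hom. case: eqP => _; ring.
  rewrite !hom_tmul. f_equal.
  rewrite -(Rsum_rev_iota k (fun a => tmul (hom a q) (hom (k - a) p) u)).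
  apply Rsum_ext_in => a; rewrite mem_iota add0n ltnS => /andP [_ Ha].
  by rewrite subKn.
- move=> p q E _ Hp k. apply (lie_ext (p := hom k p)) => // w. by rewrite /hom E.
Qed.

Lemma tproj_lie K (l : tensor d) : is_lie l -> is_lie (tproj K l).
Proof.
move=> Hl. apply (lie_ext (p := fun u => Rsum (iota 0 K.+1) (fun k => hom k l u))); last first.
  apply lie_tsum => k. by apply hom_lie.
move=> u. rewrite /tproj /hom.
case: (leqP (size u) K) => Hu.
  rewrite (@Rsum_ext _ _ _ (fun k => if k == size u then l u else 0)).
    rewrite Rsum_delta ?iota_uniq //. by rewrite mem_iota add0n ltnS.
  move=> k. by rewrite eq_sym.
apply Rsum_zero_in => k; rewrite mem_iota add0n ltnS => /andP [_ Hk].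
case: eqP => // E. by rewrite E ltnNge Hk in Hu.
Qed.

Lemma in_LN_lie K x : in_LN K x -> is_lie x.
Proof.
move=> [l [Hl E]]. apply (lie_ext (p := tproj K l)); last by apply tproj_lie.
move=> w; by rewrite E.
Qed.

Lemma in_LN_supp K x : in_LN K x -> supp_le K x.
Proof. move=> [l [_ E]] w Hw. rewrite E /tproj. by rewrite leqNgt Hw. Qed.
End HomSec.
Section TransLie.
Variables (d : nat) (v : 'I_d -> tensor d) (N' : nat).
Hypothesis Hv : forall i, is_lie (v i).
Hypothesis HvN : forall i, supp_le N' (v i).
Hypothesis HN'1 : (1 <= N')%N.
Implicit Types (x p q : tensor d) (u w : seq 'I_d).

Lemma tprod_cat (xs ys : seq (tensor d)) : tprod (xs ++ ys) = tmul (tprod xs) (tprod ys).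
Proof.
elim: xs => [|x xs IH] /=.
  apply functional_extensionality => u. by rewrite tmul_one_l.
rewrite IH. apply functional_extensionality => u. by rewrite tmul_assoc.
Qed.

Lemma Pw_cat w1 w2 : Pw v (w1 ++ w2) = tmul (Pw v w1) (Pw v w2).
Proof. by rewrite /Pw map_cat tprod_cat. Qed.

Lemma translate_supp K2 D : supp_le K2 D -> supp_le (K2 * N') (translate_t v D).
Proof.
move=> HD u Hu. rewrite (translate_expand Hv u HD).
apply Rsum_zero_in => w Hw.
rewrite (@supp_Pw d v N' HvN HN'1 w u); first ring.
apply: leq_ltn_trans Hu. by rewrite leq_mul2r (mem_words_upto Hw) orbT.
Qed.

Lemma translate_tmul a b p q u : supp_le a p -> supp_le b q ->
  translate_t v (tmul p q) u = tmul (translate_t v p) (translate_t v q) u.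
Proof.
move=> Ha Hb.
rewrite (translate_expand Hv u (tmul_supp Ha Hb)).
rewrite (@key_reindex d a b (a + b) p q (fun w => Pw v w u) Ha Hb (leqnn _)).
rewrite /tmul.
rewrite (@Rsum_ext _ _ _ (fun k => Rsum (words_upto d a) (fun w1 => Rsum (words_upto d b) (fun w2 =>
   p w1 * q w2 * (Pw v w1 (take k u) * Pw v w2 (drop k u)))))); last first.
  move=> k. rewrite (translate_expand Hv (take k u) Ha) (translate_expand Hv (drop k u) Hb).
  rewrite -Rsum_scal_r. apply Rsum_ext => w1. rewrite -Rsum_scal_l. apply Rsum_ext => w2. ring.
rewrite [RHS]Rsum_swap. apply Rsum_ext => w1. rewrite [RHS]Rsum_swap. apply Rsum_ext => w2.
rewrite Rsum_scal_l Pw_cat /tmul. by [].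
Qed.

Lemma translate_lie p : is_lie p -> is_lie (translate_t v p).
Proof.
move=> Hp; elim: Hp => {p}.
- move=> i. apply (lie_ext (p := tadd (letter i) (v i))); last by apply lie_add; [apply lie_letter|apply Hv].
  move=> u. rewrite /translate_t Rsum_words_upto_letter.
  case: u => [|c u] /=.
    rewrite /tadd (lie_nil (Hv i)) /letter /=. ring.
  rewrite -/(Pw v [:: i]) /Pw /= tmul_one_r. by [].
- move=> p q _ Hp _ Hq. apply (lie_ext (p := tadd (translate_t v p) (translate_t v q))); last by apply lie_add.
  move=> u. rewrite /tadd /translate_t -Rsum_plus. apply Rsum_ext => w. ring.
- move=> c p _ Hp. apply (lie_ext (p := tscale c (translate_t v p))); last by apply lie_scale.
  move=> u. rewrite /tscale /translate_t -Rsum_scal_l. apply Rsum_ext => w. ring.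
- move=> p q Hp' Hp Hq' Hq.
  have [a Ha] := lie_supp Hp'. have [b Hb] := lie_supp Hq'.
  apply (lie_ext (p := tbracket (translate_t v p) (translate_t v q))); last by apply lie_bracket.
  move=> u. rewrite /tbracket -(translate_tmul u Ha Hb) -(translate_tmul u Hb Ha).
  rewrite /translate_t -Rsum_minus. apply Rsum_ext => w. ring.
- move=> p q E _ Hp. apply (lie_ext (p := translate_t v p)) => // u.
  rewrite /translate_t. apply Rsum_ext => w. by rewrite E.
Qed.
End TransLie.
Section Calc.
Variable T : R.
Hypothesis HT : 0 < T.

Lemma near_point s d0 : in0T T s -> 0 < d0 -> exists t, in0T T t /\ t <> s /\ Rabs (t - s) < d0.
Proof.
move=> [Hs0 HsT] Hd0.
case: (Rlt_le_dec s T) => Hs.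
  set m := Rmin d0 (T - s).
  have Hm : 0 < m by apply Rmin_pos; lra.
  have Hm1 : m <= d0 by apply Rmin_l. have Hm2 : m <= T - s by apply Rmin_r.
  exists (s + m / 2). split; [rewrite /in0T; split; lra|split; [lra|]].
  replace (s + m / 2 - s) with (m / 2) by ring. rewrite Rabs_right; lra.
set m := Rmin d0 T.
have Hm : 0 < m by apply Rmin_pos; lra.
have Hm1 : m <= d0 by apply Rmin_l. have Hm2 : m <= T by apply Rmin_r.
exists (s - m / 2). split; [rewrite /in0T; split; lra|split; [lra|]].
replace (s - m / 2 - s) with (- (m / 2)) by ring. rewrite Rabs_Ropp Rabs_right; lra.
Qed.

Lemma dw_unique g s l1 l2 : in0T T s -> deriv_within T g s l1 -> deriv_within T g s l2 -> l1 = l2.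
Proof.
move=> Hs H1 H2. apply NNPP => Hne.
have He : 0 < Rabs (l1 - l2) / 2.
  have : l1 - l2 <> 0 by lra. move/Rabs_no_R0 => ?. have := Rabs_pos (l1 - l2). lra.
have [d1 [Hd1 D1]] := H1 _ He. have [d2 [Hd2 D2]] := H2 _ He.
have [t [Ht [Hts Htd]]] := near_point Hs (Rmin_pos _ _ Hd1 Hd2).
have := D1 t Ht Hts ltac:(have := Rmin_l d1 d2; lra).
have := D2 t Ht Hts ltac:(have := Rmin_r d1 d2; lra).
set q := (g t - g s) / (t - s).
move=> A B.
have : Rabs (l1 - l2) <= Rabs (q - l2) + Rabs (q - l1).
  replace (l1 - l2) with ((q - l2) + - (q - l1)) by ring.
  have := Rabs_triang (q - l2) (- (q - l1)). rewrite Rabs_Ropp. lra.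
lra.
Qed.

Lemma dw_ext g1 g2 s l : (forall t, in0T T t -> g1 t = g2 t) -> in0T T s ->
  deriv_within T g1 s l -> deriv_within T g2 s l.
Proof.
move=> E Hs H eps He. have [d0 [Hd D]] := H eps He. exists d0; split => // t Ht Hts Htd.
rewrite -!E //. by apply D.
Qed.

Lemma dw_const c s : deriv_within T (fun _ => c) s 0.
Proof.
move=> eps He. exists 1; split; [lra|]. move=> t _ Hts _.
replace ((c - c) / (t - s) - 0) with 0 by (field; lra). rewrite Rabs_R0; lra.
Qed.

Lemma dw_plus g1 g2 s l1 l2 : deriv_within T g1 s l1 -> deriv_within T g2 s l2 ->
  deriv_within T (fun t => g1 t + g2 t) s (l1 + l2).
Proof.
move=> H1 H2 eps He.
have [d1 [Hd1 D1]] := H1 (eps / 2) ltac:(lra). have [d2 [Hd2 D2]] := H2 (eps / 2) ltac:(lra).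
exists (Rmin d1 d2); split; first by apply Rmin_pos.
move=> t Ht Hts Htd.
have A := D1 t Ht Hts ltac:(have := Rmin_l d1 d2; lra).
have B := D2 t Ht Hts ltac:(have := Rmin_r d1 d2; lra).
have Hts' : t - s <> 0 by lra.
replace ((g1 t + g2 t - (g1 s + g2 s)) / (t - s) - (l1 + l2)) with
  (((g1 t - g1 s) / (t - s) - l1) + ((g2 t - g2 s) / (t - s) - l2)) by (field; lra).
have := Rabs_triang ((g1 t - g1 s) / (t - s) - l1) ((g2 t - g2 s) / (t - s) - l2). lra.
Qed.

Lemma dw_scal c g s l : deriv_within T g s l -> deriv_within T (fun t => c * g t) s (c * l).
Proof.
move=> H eps He.
have [d1 [Hd1 D1]] := H (eps / (Rabs c + 1)) ltac:(apply Rdiv_lt_0_compat; [lra|have := Rabs_pos c; lra]).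
exists d1; split => // t Ht Hts Htd.
have A := D1 t Ht Hts Htd.
have Hts' : t - s <> 0 by lra.
replace ((c * g t - c * g s) / (t - s) - c * l) with (c * ((g t - g s) / (t - s) - l)) by (field; lra).
rewrite Rabs_mult.
have Hc := Rabs_pos c.
apply: (Rle_lt_trans _ ((Rabs c + 1) * Rabs ((g t - g s) / (t - s) - l))).
  apply Rmult_le_compat_r; [apply Rabs_pos|lra].
have -> : eps = (Rabs c + 1) * (eps / (Rabs c + 1)) by field; lra.
apply Rmult_lt_compat_l; lra.
Qed.

Lemma dw_Rsum {A} (s' : seq A) (G : A -> R -> R) (L : A -> R) s :
  (forall a, deriv_within T (G a) s (L a)) ->
  deriv_within T (fun t => Rsum s' (fun a => G a t)) s (Rsum s' L).
Proof.
move=> H; elim: s' => [|a s' IH]; first exact (dw_const 0 s).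
rewrite Rsum_cons. exact: dw_plus (H a) IH.
Qed.

Lemma smooth_dw g s : smooth_on T g -> in0T T s -> exists l, deriv_within T g s l.
Proof.
move=> [G [HG EG]] Hs.
have HG1 : ex_derive G s by exact: (HG 1%nat s).
have := Derive_correct _ _ HG1. move/is_derive_Reals => HD.
exists (Derive G s) => eps He.
have [dl Hdl] := HD eps He.
exists dl; split; first by apply cond_pos.
move=> t Ht Hts Htd.
have := Hdl (t - s) ltac:(lra) Htd.
replace (s + (t - s)) with t by ring. by rewrite -!EG.
Qed.
End Calc.
Section Diag.
Variables (T : R) (d : nat).
Hypothesis HT : 0 < T.

Lemma dw_scal_r g s l c : deriv_within T g s l -> deriv_within T (fun t => g t * c) s (l * c).
Proof.
move=> H. have E : (fun t => g t * c) = (fun t => c * g t).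
  apply functional_extensionality => t; ring.
rewrite E Rmult_comm. by apply dw_scal.
Qed.

Lemma dd_unique (X : twopar d) s D1 D2 : in0T T s -> is_diag_deriv T X s D1 -> is_diag_deriv T X s D2 ->
  forall w, D1 w = D2 w.
Proof. move=> Hs H1 H2 w. apply: (dw_unique HT Hs); [exact: H1|exact: H2]. Qed.

Lemma dd_exists (X : twopar d) s : (forall w, smooth_on T (fun t => X s t w)) -> in0T T s ->
  exists D, is_diag_deriv T X s D.
Proof.
move=> HX Hs.
have H : forall w, exists l, deriv_within T (fun t => X s t w) s l.
  move=> w. exact: smooth_dw (HX w) Hs.
exists (fun w => proj1_sig (constructive_indefinite_description _ (H w))).
move=> w. exact: (proj2_sig (constructive_indefinite_description _ (H w))).
Qed.

Lemma dd_translate (v : 'I_d -> tensor d) (X : twopar d) s D : is_diag_deriv T X s D ->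
  is_diag_deriv T (translate v X) s (translate_t v D).
Proof.
move=> H u. rewrite /translate /translate_t. apply dw_Rsum => w. by apply dw_scal_r.
Qed.

Lemma dd_calT (v : 'I_d -> tensor d) M (X : twopar d) s D : is_diag_deriv T X s D ->
  is_diag_deriv T (calT v M X) s (tproj M (translate_t v D)).
Proof.
move=> H u. rewrite /calT /tproj. case: ifP => _; last by apply dw_const.
exact (dd_translate v H u).
Qed.
End Diag.

Lemma fieldsC_of (d e : nat) (f : 'I_d -> VF e) : (forall i, smooth_bdd_field (f i)) -> fieldsC f.
Proof. move=> Hf i j l. have [A [B _]] := Hf i l j. by split. Qed.
Unset Implicit Arguments.
Theorem theorem2p26 (T : R) (d e : nat) (HT : 0 < T)
  (Hd : (1 <= d)%N) (He : (1 <= e)%N)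
  (f : 'I_d -> VF e) (Hf : forall i, smooth_bdd_field (f i))
  (v : 'I_d -> tensor d) (Hv : forall i, is_lie (v i))
  (N' : nat) (HN'1 : (1 <= N')%N) (HN' : forall i, in_LN N' (v i))
  (HN'min : forall n : nat, (1 <= n)%N -> (forall i, in_LN n (v i)) -> (N' <= n)%N) :
  (forall X : twopar d, is_good_sgrm T X ->
     forall Y : R -> point e,
       solves_good T f (translate v X) Y <-> solves_good T (fv f v N') X Y) /\
  (forall (N : nat) (W : twopar d), is_Nsgrm T N W ->
     forall Xm : twopar d, is_MinExt T N W Xm ->
     forall Y : R -> point e,
       solves_K T (N * N') f (calT v (N * N') Xm) Y <-> solves_K T N (fv f v N') W Y).
Proof.
have Hfc : fieldsC f := fieldsC_of Hf.
have HvN : forall i, supp_le N' (v i) := fun i => in_LN_supp (HN' i).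
have MI : forall (D : tensor d) K1 K2 y j, supp_le K2 D -> supp_le K1 (translate_t v D) ->
  Rsum (words_upto d K1) (fun u => fw f u y j * translate_t v D u) =
  Rsum (words_upto d K2) (fun w => fw (fv f v N') w y j * D w).
  move=> D K1 K2 y j HD HT'. exact: main_identity.
have TS : forall (D : tensor d) K2, supp_le K2 D -> supp_le (K2 * N') (translate_t v D).
  move=> D K2 HD. exact: translate_supp.
split.
- move=> X [N0 [W0 [HW0 [HXs [HXeq HXmin]]]]] Y.
  have [_ [_ [_ HXsm]]] := HXs.
  split.
  + move=> [K1 [HK1 [HY HYd]]]. exists N0. split; first exact HXmin. split => // s Hs.
    have [D HD] := dd_exists (fun w => HXsm s w Hs) Hs.
    have [D1 [HD1 HYe]] := HYd s Hs.
    have E1 : forall u, D1 u = translate_t v D u := dd_unique HT Hs HD1 (dd_translate v HD).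
    have HDs : supp_le N0 D := in_LN_supp (HXmin s D Hs HD).
    have HTs : supp_le K1 (translate_t v D) := supp_ext E1 (in_LN_supp (HK1 s D1 Hs HD1)).
    exists D; split => // j.
    rewrite -(MI D K1 N0 (Y s) j HDs HTs).
    rewrite (@Rsum_ext _ _ _ (fun u => fw f u (Y s) j * D1 u)); first exact: HYe j.
    move=> u; by rewrite E1.
  + move=> [K2 [HK2 [HY HYd]]]. exists (K2 * N')%N. split.
    * move=> s D1 Hs HD1.
      have [D HD] := dd_exists (fun w => HXsm s w Hs) Hs.
      have E1 := dd_unique HT Hs HD1 (dd_translate v HD).
      have HDL := HK2 s D Hs HD.
      exists (translate_t v D); split; first exact: (translate_lie Hv (in_LN_lie Hd HDL)).
      move=> w. rewrite E1 /tproj. case: leqP => // Hw. by rewrite (TS D K2 (in_LN_supp HDL)).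
    * split => // s Hs. have [D [HD HYe]] := HYd s Hs.
      exists (translate_t v D); split; first exact: dd_translate.
      move=> j. have HDs := in_LN_supp (HK2 s D Hs HD).
      rewrite (MI D (K2 * N')%N K2 (Y s) j HDs (TS D K2 HDs)). exact: HYe.
- move=> N W HW Xm [HXs [HXeq HXmin]] Y.
  have [HW0 [_ [_ [_ HWsm]]]] := HW.
  have [_ [_ [_ HXsm]]] := HXs.
  split.
  + move=> [HY HYd]. split => // s Hs.
    have [D1 [HD1 HYe]] := HYd s Hs.
    have [Dx HDx] := dd_exists (fun w => HXsm s w Hs) Hs.
    have HDxs : supp_le N Dx := in_LN_supp (HXmin s Dx Hs HDx).
    have HTs := TS Dx N HDxs.
    have E1 : forall u, D1 u = translate_t v Dx u.
      move=> u. rewrite (dd_unique HT Hs HD1 (dd_calT v (N * N') HDx) u) /tproj.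
      case: leqP => // Hu. by rewrite HTs.
    exists Dx; split.
    * move=> w. case: (leqP (size w) N) => Hw.
        apply: (dw_ext (g1 := fun t => Xm s t w) _ Hs (HDx w)) => t Ht; by rewrite HXeq.
      rewrite (HDxs w Hw). apply: (dw_ext (g1 := fun _ => 0) _ Hs (dw_const _ _ _)) => t Ht; by rewrite HW0.
    * move=> j. rewrite -(MI Dx (N * N')%N N (Y s) j HDxs HTs).
      rewrite (@Rsum_ext _ _ _ (fun u => fw f u (Y s) j * D1 u)); first exact: HYe j.
      move=> u; by rewrite E1.
  + move=> [HY HYd]. split => // s Hs.
    have [D [HD HYe]] := HYd s Hs.
    have [Dx HDx] := dd_exists (fun w => HXsm s w Hs) Hs.
    have HDxs : supp_le N Dx := in_LN_supp (HXmin s Dx Hs HDx).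
    have HTs := TS Dx N HDxs.
    have ED : forall w, (size w <= N)%N -> D w = Dx w.
      move=> w Hw. apply: (dw_unique HT Hs (HD w)).
      apply: (dw_ext (g1 := fun t => Xm s t w) _ Hs (HDx w)) => t Ht; by rewrite HXeq.
    exists (tproj (N * N') (translate_t v Dx)); split; first exact: dd_calT.
    move=> j.
    rewrite (@Rsum_ext _ _ _ (fun w => fw f w (Y s) j * translate_t v Dx w)); last first.
      move=> u. rewrite /tproj. case: leqP => // Hu. by rewrite HTs.
    rewrite (MI Dx (N * N')%N N (Y s) j HDxs HTs).
    rewrite (@Rsum_ext_in _ _ _ (fun w => fw (fv f v N') w (Y s) j * D w)); first exact: HYe j.
    move=> w Hw. by rewrite ED // (mem_words_upto Hw).
Qed.
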